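(* Let $k\geq 3$ and let $G$ be a diregular $(2,k,+3)$-digraph. Let $u,v$ be distinct vertices with exactly one common out-neighbour $u_2$, and write $N^+(u)=\{u_1,u_2\}$, $N^+(v)=\{v_1,u_2\}$. Then $v_1\in O(u)$ or $u_1\in O(v)$.
   Context: A digraph is $k$-geodetic if for every ordered pair of vertices $x,y$ there is at most one directed path from $x$ to $y$ of length at most $k$ (the trivial path counts). A diregular $(2,k,+3)$-digraph is a $k$-geodetic digraph of order $1+2+\dots+2^k+3$ in which every vertex has in- and out-degree $2$. $N^+(x)$ is the set of out-neighbours of $x$. $d(x,y)$ is the directed distance; $O(x)=\{y: d(x,y)\geq k+1\}$ is the outlier set of $x$. *)

(* Defs.v *)
From mathcomp Require Import all_boot.
Set Implicit Arguments. Unset Strict Implicit. Unset Printing Implicit Defensive.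

(* A digraph is a relation e : rel T on a finite vertex type T (arc x -> y iff e x y).
   A directed walk from x of length n is a sequence p with size p = n,
   path e x p, ending at last x p. *)

Definition outN (T : finType) (e : rel T) (x : T) : {set T} := [set y | e x y].
Definition inN (T : finType) (e : rel T) (x : T) : {set T} := [set y | e y x].

(* k-geodetic: for all x y, at most one directed x-y walk of length <= k
   (the trivial walk of length 0 counts). *)
Definition k_geodetic (T : finType) (e : rel T) (k : nat) : Prop :=
  forall (x : T) (p q : seq T),
    size p <= k -> size q <= k -> path e x p -> path e x q ->
    last x p = last x q -> p = q.

Definition diregular (T : finType) (e : rel T) (d : nat) : Prop :=
  forall x : T, #|outN e x| = d /\ #|inN e x| = d.

Definition digraph_2k3 (T : finType) (e : rel T) (k : nat) : Prop :=
  [/\ k_geodetic e k, diregular e 2 & #|T| = (\sum_(i < k.+1) 2 ^ i) + 3].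

Definition dist_le (T : finType) (e : rel T) (n : nat) (x y : T) : Prop :=
  exists p : seq T, [/\ size p <= n, path e x p & last x p = y].

Definition outlier (T : finType) (e : rel T) (k : nat) (x y : T) : Prop :=
  ~ dist_le e k x y.

(* Main.v *)
Require Import Defs.
From mathcomp Require Import all_boot.
From mathcomp Require Import zify.
Set Implicit Arguments. Unset Strict Implicit. Unset Printing Implicit Defensive.

Section Aux.
Variables (T : finType) (e : rel T).

Fixpoint reach (j : nat) (x y : T) : bool :=
  (x == y) || (if j is j'.+1 then [exists z, e x z && reach j' z y] else false).

Lemma reachP j x y : reflect (dist_le e j x y) (reach j x y).
Proof.
apply: (iffP idP).
- elim: j x => [|j IH] x /=.
  + by rewrite orbF => /eqP <-; exists [::].
  + case/orP => [/eqP <-|/existsP [z /andP [exz /IH [p [sp pp lp]]]]].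
    * by exists [::].
    * by exists (z :: p); split => //=; rewrite exz.
- case=> p [sp pp lp]; elim: j x p sp pp lp => [|j IH] x [|z p] //=.
  + by move=> _ _ ->; rewrite eqxx.
  + by move=> _ _ ->; rewrite eqxx.
  + move=> sp /andP [exz pp] lp; apply/orP; right; apply/existsP; exists z.
    by rewrite exz (IH z p).
Qed.

Variable k : nat.
Hypothesis geo : k_geodetic e k.
Hypothesis reg : diregular e 2.

Lemma geoE {x p q} : size p <= k -> size q <= k -> path e x p -> path e x q ->
  last x p = last x q -> p = q.
Proof. exact: geo. Qed.

Lemma no_cycle x p : path e x p -> size p <= k -> last x p = x -> p = [::].
Proof. move=> pp sp lp; exact: (geo (q := [::]) sp (leq0n k) pp isT lp). Qed.

Lemma outN2 x : exists y1 y2, [/\ y1 != y2, e x y1 & e x y2].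
Proof.
have [/eqP/cards2P [y1 [y2 [ne hs]]] _] := reg x.
exists y1, y2; split => //.
- have : y1 \in outN e x by rewrite hs !inE eqxx.
  by rewrite inE.
- have : y2 \in outN e x by rewrite hs !inE eqxx orbT.
  by rewrite inE.
Qed.

Lemma outN_other x y : e x y -> exists z, z != y /\ e x z.
Proof.
move=> exy; have [y1 [y2 [ne e1 e2]]] := outN2 x.
case: (eqVneq y1 y).
- by move=> E; exists y2; split => //; rewrite -E eq_sym.
- by move=> N; exists y1.
Qed.

Lemma exists_walk x n : exists p, path e x p /\ size p = n.
Proof.
elim: n x => [|n IH] x; first by exists [::].
have [y1 [_ [_ e1 _]]] := outN2 x.
have [p [pp sp]] := IH y1.
by exists (y1 :: p); rewrite /= e1 pp sp.
Qed.

Lemma card_disjU (A B : {set T}) : (forall y, y \in A -> y \in B -> False) ->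
  #|A :|: B| = #|A| + #|B|.
Proof.
move=> H; rewrite cardsU.
have -> : A :&: B = set0.
  apply/setP => y; rewrite !inE; apply/negbTE/negP => /andP [a b]; exact: H a b.
by rewrite cards0 subn0.
Qed.

Lemma card_reach j : j <= k -> forall x, 2 ^ j.+1 <= #|[set y | reach j x y]|.+1.
Proof.
elim: j => [|j IH] hj x.
  have : x \in [set y | reach 0 x y] by rewrite inE /= eqxx.
  by move=> H; rewrite expn1 ltnS card_gt0; apply/set0Pn; exists x.
have [y1 [y2 [ne e1 e2]]] := outN2 x.
have IH1 := IH (ltnW hj) y1; have IH2 := IH (ltnW hj) y2.
have sub : x |: ([set y | reach j y1 y] :|: [set y | reach j y2 y]) \subset
           [set y | reach j.+1 x y].
  apply/subsetP => y; rewrite !inE => /orP [/eqP ->|/orP [h|h]] /=.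
  - by rewrite eqxx.
  - by apply/orP; right; apply/existsP; exists y1; rewrite e1.
  - by apply/orP; right; apply/existsP; exists y2; rewrite e2.
have := subset_leq_card sub.
rewrite cardsU1 card_disjU.
- have -> : x \notin [set y | reach j y1 y] :|: [set y | reach j y2 y].
    apply/negP; rewrite !inE => /orP [] /reachP [p [sp pp lp]].
    + have := no_cycle (x := x) (p := y1 :: p); rewrite /= e1 pp lp /=.
      by move=> /(_ isT (leq_ltn_trans sp hj) erefl).
    + have := no_cycle (x := x) (p := y2 :: p); rewrite /= e2 pp lp /=.
      by move=> /(_ isT (leq_ltn_trans sp hj) erefl).
  rewrite expnS; lia.
- move=> y; rewrite !inE => /reachP [p [sp pp lp]] /reachP [q [sq pq lq]].
  have := geo (x := x) (p := y1 :: p) (q := y2 :: q) (leq_ltn_trans sp hj) (leq_ltn_trans sq hj).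
  rewrite /= e1 e2 pp pq lp lq /= => /(_ isT isT erefl) [E _].
  by rewrite E eqxx in ne.
Qed.


Lemma L1 x x1 r : e x x1 -> path e x1 r -> size r < k -> last x1 r = x -> False.
Proof.
move=> ex pr sr lr.
by have := no_cycle (x := x) (p := x1 :: r); rewrite /= ex pr lr => /(_ isT sr erefl).
Qed.

Lemma L2 x x1 c r s : e x x1 -> e x c -> x1 != c -> path e x1 r -> size r < k ->
  path e c s -> size s < k -> last x1 r = last c s -> False.
Proof.
move=> ex1 exc ne pr sr ps ss l.
have := geo (x := x) (p := x1 :: r) (q := c :: s) sr ss.
rewrite /= ex1 exc pr ps => /(_ isT isT l) [E _].
by rewrite E eqxx in ne.
Qed.

Lemma L3 x x1 c y y1 pa r : e x x1 -> e x c -> e y c -> path e x1 pa -> size pa < k ->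
  last x1 pa = y1 -> e y y1 -> path e x1 r -> size r < k -> last x1 r = y -> False.
Proof.
move=> ex1 exc eyc ppa spa lpa eyy1 pr sr lr.
have := geo (x := x1) (p := rcons r y1) (q := pa).
rewrite size_rcons rcons_path pr lr eyy1 last_rcons lpa => /(_ sr (ltnW spa) isT ppa erefl) E.
have sz : (size r).+2 <= k by rewrite -E size_rcons in spa.
have := geo (x := x) (p := x1 :: rcons r c) (q := [:: c]).
rewrite /= size_rcons rcons_path ex1 pr lr eyc exc last_rcons.
have k0 : 0 < k by lia.
by move=> /(_ sz k0 isT isT erefl) [] _ /(congr1 size); rewrite size_rcons.
Qed.


Lemma first_step x y x1 y1 c : 2 <= k -> e x x1 -> e x c -> e y y1 -> e y c -> y1 != c ->
  outN e x = [set x1; c] -> dist_le e k x y1 ->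
  exists pa, [/\ path e x1 pa, size pa < k & last x1 pa = y1].
Proof.
move=> k2 ex1 exc ey1 eyc ne hx [[|z p] [sp pp lp]].
  simpl in lp; subst y1.
  have := geo (x := y) (p := [:: x; c]) (q := [:: c]) k2 (ltnW k2).
  by rewrite /= ey1 exc eyc => /(_ isT isT erefl).
move: pp => /= /andP [exz pp]; simpl in lp.
have : z \in outN e x by rewrite inE.
rewrite hx !inE => /orP [/eqP E|/eqP E]; subst z.
  by exists p.
have := geo (x := y) (p := c :: p) (q := [:: y1]) sp (ltnW k2).
rewrite /= eyc pp ey1 lp => /(_ isT isT erefl) [E _].
by rewrite E eqxx in ne.
Qed.

End Aux.

Lemma sum2 n : (\sum_(i < n) 2 ^ i).+1 = 2 ^ n.
Proof.
elim: n => [|n IH]; first by rewrite big_ord0.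
by rewrite big_ord_recr /= -addSn IH expnS; lia.
Qed.

Ltac slia := repeat match goal with
  | H : ?A |- _ => lazymatch A with
       | is_true (leq _ _) => fail
       | @eq nat _ _ => fail
       | _ => clear H end
  end; lia.

Theorem lemma5 (T : finType) (e : rel T) (k : nat) (u v u1 u2 v1 : T) :
  3 <= k ->
  digraph_2k3 e k ->
  u != v ->
  outN e u :&: outN e v = [set u2] ->
  outN e u = [set u1; u2] ->
  outN e v = [set v1; u2] ->
  outlier e k u v1 \/ outlier e k v u1.
Proof.
move=> hk [geo reg cardT] nuv hI hu hv.
have cT : #|T|.+1 = 2 ^ k.+1 + 3 by rewrite cardT -addSn sum2.
clear cardT.
have k0 : 0 < k by slia.
have k2 : 2 <= k by slia.
have inN : forall x z, (z \in outN e x) = e x z by move=> x z; rewrite inE.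
have eu1 : e u u1 by rewrite -inN hu !inE eqxx.
have eu2 : e u u2 by rewrite -inN hu !inE eqxx orbT.
have ev1 : e v v1 by rewrite -inN hv !inE eqxx.
have ev2 : e v u2 by rewrite -inN hv !inE eqxx orbT.
have nu12 : u1 != u2 by have := (reg u).1; rewrite hu cards2; case: (u1 != u2).
have nv12 : v1 != u2 by have := (reg v).1; rewrite hv cards2; case: (v1 != u2).
have nuv1 : u1 != v1.
  apply/negP => /eqP E.
  have : u1 \in outN e u :&: outN e v by rewrite !inE eu1 E ev1.
  by rewrite hI inE => /eqP E2; rewrite E2 eqxx in nu12.
case: (boolP (reach e k u v1)) => [/reachP h1|/reachP h1]; last by left.
case: (boolP (reach e k v u1)) => [/reachP h2|/reachP h2]; last by right.
exfalso.
have [pa [ppa spa lpa]] := first_step geo k2 eu1 eu2 ev1 ev2 nv12 hu h1.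
have [pb [ppb spb lpb]] := first_step geo k2 ev1 ev2 eu1 eu2 nu12 hv h2.
clear hI hu hv h1 h2 inN.
have cyc : k < size pa + size pb.
  rewrite ltnNge; apply/negP => h.
  have := no_cycle geo (x := u1) (p := pa ++ pb).
  rewrite cat_path ppa lpa ppb last_cat lpa lpb size_cat => /(_ isT h erefl).
  case: pa {ppa spa h} lpa => [/= E _|//].
  by rewrite E eqxx in nuv1.
have notB : forall r, path e u1 r -> size pb + size r = k ->
    ~~ reach e k.-1 v1 (last u1 r).
  move=> r pr sr; apply/negP => /reachP [s [ss ps ls]].
  have := geoE geo (x := v1) (p := pb ++ r) (q := s).
  rewrite size_cat sr cat_path ppb lpb pr last_cat lpb ls.
  move=> /(_ (leqnn k) (leq_trans ss (leq_pred k)) isT ps erefl) /(congr1 size).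
  rewrite size_cat sr => E; slia.
have X : exists y1 y2 y3, [/\ y1 != y2, y1 != y3, y2 != y3 &
    forall y, y \in [:: y1; y2; y3] ->
      (exists r, [/\ path e u1 r, size r < k & last u1 r = y]) /\
      ~~ reach e k.-1 v1 y].
  have [hb|hb] : size pb = k.-1 \/ size pb < k.-1 by slia.
  - have [x1 [x2 [nx ex1 ex2]]] := outN2 reg u1.
    case/lastP: pa ppa spa lpa cyc => [|pa' w] ppa spa lpa cyc.
      by rewrite /= in lpa; rewrite lpa eqxx in nuv1.
    rewrite last_rcons in lpa; subst w.
    move: ppa; rewrite rcons_path => /andP [ppa' eqv].
    have [c' [nc ec]] := outN_other reg eqv.
    rewrite size_rcons in spa cyc.
    have ndx : forall x, e u1 x -> x != c'.
      move=> x ex; apply/negP => /eqP E; subst c'.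
      have := geoE geo (x := u1) (p := [:: x]) (q := rcons pa' x).
      rewrite size_rcons rcons_path ppa' ec last_rcons /= ex.
      move=> /(_ k0 (ltnW spa) isT isT erefl) /(congr1 size).
      rewrite size_rcons /= => -[] E; slia.
    exists x1, x2, c'; split => //; try exact: ndx.
    move=> y; rewrite !inE => /or3P [] /eqP ->.
    + split; first by exists [:: x1]; rewrite /= ex1; split => //.
      have := notB [:: x1]; rewrite /= ex1 hb => /(_ isT) H; apply: H; slia.
    + split; first by exists [:: x2]; rewrite /= ex2; split => //.
      have := notB [:: x2]; rewrite /= ex2 hb => /(_ isT) H; apply: H; slia.
    + split.
        exists (rcons pa' c'); rewrite rcons_path ppa' ec size_rcons last_rcons.
        by split.
      apply/negP => /reachP [s [ss ps ls]].
      have := geoE geo (x := last u1 pa') (p := v1 :: s) (q := [:: c']).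
      rewrite /= eqv ps ec ls.
      have ss' : (size s).+1 <= k by slia.
      move=> /(_ ss' k0 isT isT erefl) [E _].
      by rewrite E eqxx in nc.
  - have [p0 [pp0 sp0]] := exists_walk reg u1 (k - size pb - 2).
    have [s1 [s2 [ns es1 es2]]] := outN2 reg (last u1 p0).
    have [w1 [w2 [nw ew1 ew2]]] := outN2 reg s1.
    have [w3 [_ [_ ew3 _]]] := outN2 reg s2.
    have Pw : forall s w, e (last u1 p0) s -> e s w ->
        (exists r0, [/\ path e u1 r0, size r0 < k & last u1 r0 = w]) /\
        ~~ reach e k.-1 v1 w.
      move=> s w es ew.
      have pw : path e u1 (p0 ++ [:: s; w]) by rewrite cat_path pp0 /= es ew.
      have sw : size (p0 ++ [:: s; w]) = k - size pb by rewrite size_cat sp0 /=; slia.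
      have lw : last u1 (p0 ++ [:: s; w]) = w by rewrite last_cat.
      split; first by exists (p0 ++ [:: s; w]); split => //; rewrite sw; slia.
      rewrite -lw; apply: notB pw _; rewrite sw; slia.
    have dist : forall w w', e s1 w -> e s2 w' -> w != w'.
      move=> w w' ew ew'; apply/negP => /eqP E; subst w'.
      have := geoE geo (x := last u1 p0) (p := [:: s1; w]) (q := [:: s2; w]) k2 k2.
      rewrite /= es1 es2 ew ew' => /(_ isT isT erefl) [E].
      by rewrite E eqxx in ns.
    exists w1, w2, w3; split => //; try exact: dist.
    move=> y; rewrite !inE => /or3P [] /eqP ->;
      [exact: Pw es1 ew1 | exact: Pw es1 ew2 | exact: Pw es2 ew3].
have [y1 [y2 [y3 [n12 n13 n23 Py]]]] := X.
pose U := [set y | reach e k.-1 u2 y].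
pose B := [set y | reach e k.-1 v1 y].
have cU : 2 ^ k <= #|U|.+1.
  by have := card_reach geo reg (leq_pred k) u2; rewrite prednK.
have cB : 2 ^ k <= #|B|.+1.
  by have := card_reach geo reg (leq_pred k) v1; rewrite prednK.
have walkR : forall x y, reach e k.-1 x y ->
    exists s, [/\ path e x s, size s < k & last x s = y].
  by move=> x y /reachP [s [ss ps ls]]; exists s; split => //; slia.
have hA : forall y, (exists r, [/\ path e u1 r, size r < k & last u1 r = y]) ->
    [/\ y != u, y != v & ~~ reach e k.-1 u2 y].
  move=> y [r [pr sr lr]]; split.
  - apply/negP => /eqP E; rewrite E in lr; exact: (L1 geo eu1 pr sr lr).
  - apply/negP => /eqP E; rewrite E in lr; exact: (L3 geo eu1 eu2 ev2 ppa spa lpa ev1 pr sr lr).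
  - apply/negP => /walkR [s [ps ss ls]].
    exact: (L2 geo eu1 eu2 nu12 pr sr ps ss (etrans lr (esym ls))).
have uU : ~~ reach e k.-1 u2 u.
  by apply/negP => /walkR [s [ps ss ls]]; exact: (L1 geo eu2 ps ss ls).
have vU : ~~ reach e k.-1 u2 v.
  by apply/negP => /walkR [s [ps ss ls]]; exact: (L1 geo ev2 ps ss ls).
have vB : ~~ reach e k.-1 v1 v.
  by apply/negP => /walkR [s [ps ss ls]]; exact: (L1 geo ev1 ps ss ls).
have uB : ~~ reach e k.-1 v1 u.
  by apply/negP => /walkR [s [ps ss ls]]; exact: (L3 geo ev1 ev2 eu2 ppb spb lpb eu1 ps ss ls).
have c1 : #|U :|: B| = #|U| + #|B|.
  apply: card_disjU => y; rewrite !inE => /walkR [s [ps ss ls]] /walkR [r [pr sr lr]].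
  exact: (L2 geo ev1 ev2 nv12 pr sr ps ss (etrans lr (esym ls))).
have c2 : #|U :|: B :|: [set u; v]| = #|U :|: B| + 2.
  rewrite card_disjU ?cards2 ?nuv // => y; rewrite !inE => /orP [] h /orP [] /eqP E;
    subst y; by [rewrite h in uU | rewrite h in vU | rewrite h in uB | rewrite h in vB].
have c3 : #|[set y1; y2; y3]| = 3.
  rewrite card_disjU ?cards2 ?cards1 ?n12 // => y; rewrite !inE => /orP [] /eqP -> /eqP E.
  - by rewrite E eqxx in n13.
  - by rewrite E eqxx in n23.
have c4 : #|U :|: B :|: [set u; v] :|: [set y1; y2; y3]| =
          #|U :|: B :|: [set u; v]| + 3.
  rewrite card_disjU ?c3 // => y H; rewrite !inE => Hy.
  have [[r hr] nB] : (exists r, [/\ path e u1 r, size r < k & last u1 r = y]) /\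
      ~~ reach e k.-1 v1 y by apply: Py; move: Hy; rewrite !inE !orbA.
  have [nu nv nU] := hA y (ex_intro _ r hr).
  move: H; rewrite !inE (negbTE nu) (negbTE nv) (negbTE nU) (negbTE nB).
  by [].
have := max_card (mem (U :|: B :|: [set u; v] :|: [set y1; y2; y3])).
rewrite c4 c2 c1; move: cT; rewrite expnS; slia.
Qed.
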